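(* Let $X$ be a quasi-Polish space and $E$ an equivalence relation on $X$ such that the $E$-saturation of every open set $U\subseteq X$ is open. Define $x\preccurlyeq_E y$ iff $x\in\overline{[y]_E}$, and $x\approx_E y$ iff $x\preccurlyeq_E y$ and $y\preccurlyeq_E x$. Then the $T_0$-quotient $X/\!/E$ of the quotient space $X/E$ is a quasi-Polish space; the projection $p:X\to X/\!/E$ is continuous and open with kernel $x\approx_E y\iff\overline{[x]_E}=\overline{[y]_E}$ (so $X/\!/E$ may be identified with $X/{\approx_E}$); the specialization order of $X/\!/E$ is given by $[x]_{\approx_E}\le[y]_{\approx_E}\iff x\in\overline{[y]_E}$; and $p$ has a Borel section, i.e. $\approx_E$ has a Borel selector.
   Context: A quasi-Polish space is a topological space homeomorphic to a $\mathbf\Pi^0_2$ subset of $\mathbb S^{\mathbb N}$, where $\mathbb S=\{0<1\}$ is the Sierpiński space ($\{1\}$ open, $\{0\}$ not open), and $\mathbf\Pi^0_2$ means a countable intersection of sets of the form $U\cup F$ with $U$ open and $F$ closed. The specialization preorder of a space is $x\lesssim y\iff x\in\overline{\{y\}}$; the $T_0$-quotient identifies points with the same closure (i.e. equivalent under the symmetric part of this preorder), with the quotient topology. Quasi-Polish spaces carry a standard Borel structure. *)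

(* Defs.v *)
From HB Require Import structures.
From mathcomp Require Import all_boot all_order all_algebra.
From mathcomp Require Import generic_quotient.
From mathcomp Require Import all_classical topology measure.

Set Implicit Arguments.
Unset Strict Implicit.
Unset Printing Implicit Defensive.

Local Open Scope classical_set_scope.

(* false = 0, true = 1 ; open sets are the up-sets: {}, {true}, setT.         *)
Definition sierpinski : Type := bool.
HB.instance Definition _ := Choice.copy sierpinski bool.

Definition sierpinski_open (U : set sierpinski) : Prop := U false -> U true.

Lemma sierpinski_openT : sierpinski_open setT.
Proof. by []. Qed.

Lemma sierpinski_openI : setI_closed sierpinski_open.
Proof. by move=> A B hA hB [/hA ? /hB ?]. Qed.

Lemma sierpinski_open_bigU (I : Type) (f : I -> set sierpinski) :
  (forall i, sierpinski_open (f i)) -> sierpinski_open (\bigcup_i f i).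
Proof. by move=> h [i _ fi]; exists i => //; exact: h. Qed.

HB.instance Definition _ := isOpenTopological.Build sierpinski
  sierpinski_openT sierpinski_openI sierpinski_open_bigU.

Definition sierpinski_omega : topologicalType := {ptws nat -> sierpinski}.

Definition Pi02 (T : topologicalType) (A : set T) : Prop :=
  exists (U F : nat -> set T),
    [/\ (forall n, open (U n)), (forall n, closed (F n))
      & A = \bigcap_n (U n `|` F n)].

(* X is quasi-Polish iff X is homeomorphic to a Pi^0_2 subset A of S^N
   (with the subspace topology): h : X -> S^N is injective with image A,
   and the open sets of X are exactly the preimages under h of open
   subsets of S^N. *)
Definition quasi_polish (X : topologicalType) : Prop :=
  exists (A : set sierpinski_omega) (h : X -> sierpinski_omega),
    [/\ Pi02 A, injective h, range h = A
      & forall V : set X, open V <-> exists2 W, open W & V = h @^-1` W].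

Definition borel (T : topologicalType) : set (set T) :=
  smallest (sigma_algebra setT) open.

Definition borel_measurable (T U : topologicalType) (f : T -> U) : Prop :=
  forall B, borel B -> borel (f @^-1` B).

Local Open Scope quotient_scope.

Definition quotient_space (X : topologicalType) (E : equiv_rel X) : topologicalType :=
  quotient_topology {eq_quot E}.

Section T0Quotient.
Variable Y : topologicalType.

Definition same_closure : rel Y :=
  fun x y => `[< closure [set x] = closure [set y] >].

Lemma same_closure_refl : reflexive same_closure.
Proof. by move=> x; apply/asboolP. Qed.

Lemma same_closure_sym : symmetric same_closure.
Proof.
by move=> x y; apply/asboolP/asboolP => h.
Qed.

Lemma same_closure_trans : transitive same_closure.
Proof.
by move=> y x z /asboolP h1 /asboolP h2; apply/asboolP; rewrite h1 h2.
Qed.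

Canonical same_closure_equiv :=
  EquivRel same_closure same_closure_refl same_closure_sym same_closure_trans.

Definition T0_quotient : topologicalType :=
  quotient_topology {eq_quot same_closure}.

Definition T0_proj : Y -> T0_quotient := fun y => \pi_T0_quotient y.
End T0Quotient.

Definition sep_quotient (X : topologicalType) (E : equiv_rel X) : topologicalType :=
  T0_quotient (quotient_space E).

Definition sep_proj (X : topologicalType) (E : equiv_rel X) : X -> sep_quotient E :=
  fun x => T0_proj (\pi_(quotient_space E) x).

Definition eclass (X : Type) (E : rel X) (x : X) : set X := [set y | E x y].

Definition saturation (X : Type) (E : rel X) (U : set X) : set X :=
  [set x | exists2 y, U y & E x y].

Definition precE (X : topologicalType) (E : rel X) (x y : X) : Prop :=
  closure (eclass E y) x.

Definition approxE (X : topologicalType) (E : rel X) (x y : X) : Prop :=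
  precE E x y /\ precE E y x.

Definition spec_le (T : topologicalType) (a b : T) : Prop := closure [set b] a.

(* Main.v *)
Require Import Defs.
From HB Require Import structures.
From mathcomp Require Import all_boot all_order all_algebra.
From mathcomp Require Import generic_quotient.
From mathcomp Require Import all_classical topology measure.

Set Implicit Arguments.
Unset Strict Implicit.
Unset Printing Implicit Defensive.
Local Open Scope classical_set_scope.
Local Open Scope quotient_scope.

Lemma closure_openP (T : topologicalType) (A : set T) x :
  closure A x <-> forall U, open U -> U x -> exists2 a, A a & U a.
Proof.
split.
  move=> h U oU Ux; have [a [Aa Ua]] := h U (open_nbhs_nbhs (conj oU Ux)).
  by exists a.
move=> h B; rewrite nbhsE => -[U [oU Ux] UB].
by have [a Aa Ua] := h U oU Ux; exists a; split => //; exact: UB.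
Qed.

Section QT.
Context (T : topologicalType) (e : equiv_rel T).
Local Notation Q := (quotient_topology {eq_quot e}).

Lemma qopenE (V : set Q) : open V <-> open ((\pi_Q : T -> Q) @^-1` V).
Proof. by []. Qed.

Lemma qpiE (x y : T) : (\pi_Q x = \pi_Q y :> Q) <-> e x y.
Proof.
split => h.
  by apply/(@eqquotP _ _ {eq_quot e}).
by apply/(@eqquotP _ _ {eq_quot e}).
Qed.

End QT.

Section Main.
Context (X : topologicalType) (E : equiv_rel X).
Hypothesis hsat : forall U : set X, open U -> open (saturation E U).
Local Notation Y := (quotient_space E).
Local Notation pi := (\pi_Y : X -> Y).

Lemma pi_preim_img (U : set X) : pi @^-1` (pi @` U) = saturation E U.
Proof.
apply/seteqP; split => x /=.
  by case=> u Uu /qpiE Eux; exists u => //; rewrite equiv_sym.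
by case=> u Uu Exu; exists u => //; apply/qpiE; rewrite equiv_sym.
Qed.

Lemma pi_open (U : set X) : open U -> open (pi @` U).
Proof. by move=> oU; apply/qopenE; rewrite pi_preim_img; exact: hsat. Qed.

Lemma pi_surj (a : Y) : exists x, pi x = a.
Proof. by exists (repr a); rewrite reprK. Qed.

Lemma cl_pi (x y : X) : closure [set pi x] (pi y) <-> closure (eclass E x) y.
Proof.
split.
  move/closure_openP => h; apply/closure_openP => U oU Uy.
  have [a -> [u Uu ux]] := h _ (pi_open oU) (ex_intro2 _ _ y Uy erefl).
  by exists u => //; apply/qpiE.
move/closure_openP => h; apply/closure_openP => V /qopenE oV Vy.
have [u Exu Vu] := h _ oV Vy.
by exists (pi x) => //; have -> : pi x = pi u by apply/qpiE.
Qed.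

Lemma cl_eclass_sat (y z w : X) : closure (eclass E y) z -> E z w ->
  closure (eclass E y) w.
Proof.
move/closure_openP => h Ezw; apply/closure_openP => U oU Uw.
have [a /= Eya [u Uu Eau]] := h _ (hsat oU) (ex_intro2 _ _ w Uw Ezw).
by exists u => //; rewrite /eclass /=; exact: equiv_trans Eau.
Qed.

Lemma approx_cl (x y : X) :
  approxE E x y <-> closure (eclass E x) = closure (eclass E y).
Proof.
have sub a b : closure (eclass E b) a ->
    closure (eclass E a) `<=` closure (eclass E b).
  move=> h; rewrite [X in _ `<=` X](closure_id _).1; last exact: closed_closure.
  apply: closureS => z /= Eaz; exact: cl_eclass_sat h Eaz.
split.
  by case=> h1 h2; apply/seteqP; split; apply: sub.
move=> eq; split; rewrite /precE.
  by rewrite -eq; apply: subset_closure; rewrite /eclass /=.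
by rewrite eq; apply: subset_closure; rewrite /eclass /=.
Qed.

End Main.

Section T0.
Context (Y : topologicalType).
Local Notation Z := (T0_quotient Y).
Local Notation q := (@T0_proj Y).

Lemma q_eq (a b : Y) : q a = q b <-> closure [set a] = closure [set b].
Proof.
rewrite /T0_proj; split.
  by move/(@qpiE Y (same_closure_equiv Y)) => /asboolP.
by move=> h; apply/(@qpiE Y (same_closure_equiv Y)); apply/asboolP.
Qed.

Lemma open_sat (V : set Y) a b : open V -> V a -> q a = q b -> V b.
Proof.
move=> oV Va /q_eq h.
have : closure [set b] a by rewrite -h; exact: subset_closure.
move/closure_openP => /(_ V oV Va) [c -> //].
Qed.

Lemma q_preim_img (V : set Y) : open V -> q @^-1` (q @` V) = V.
Proof.
move=> oV; apply/seteqP; split => a /=; last by exists a.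
by case=> b Vb qba; apply: open_sat oV Vb qba.
Qed.

Lemma q_open (V : set Y) : open V -> open (q @` V).
Proof. by move=> oV; apply/qopenE; rewrite /T0_proj in oV *; rewrite (q_preim_img oV). Qed.

Lemma cl_q (a b : Y) : closure [set q b] (q a) <-> closure [set b] a.
Proof.
split.
  move/closure_openP => h; apply/closure_openP => V oV Va.
  have [c -> [d Vd qdb]] := h _ (q_open oV) (ex_intro2 _ _ a Va erefl).
  by exists b => //; apply: open_sat oV Vd qdb.
move/closure_openP => h; apply/closure_openP => W oW Wa.
have [c -> Wb] := h (q @^-1` W) oW Wa.
by exists (q b).
Qed.

End T0.

Local Notation Om := sierpinski_omega.
Definition cyl (s : seq nat) : set Om := [set z | forall i, i \in s -> z i].

Lemma sier_nbhs (b : sierpinski) (A : set sierpinski) : nbhs b A -> A true.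
Proof.
rewrite nbhsE => -[B [oB Bb BA]]; apply: BA; case: b Bb => //; exact: oB.
Qed.

Lemma sier_nbhs_false (A : set sierpinski) : nbhs (false : sierpinski) A -> A = setT.
Proof.
rewrite nbhsE => -[B [oB Bb BA]]; apply/seteqP; split => // b _; apply: BA.
destruct b => //; exact: oB.
Qed.

Lemma omega_open_basic (O : set Om) (x : Om) : open O -> O x ->
  exists s : seq nat, (forall i, i \in s -> x i) /\ cyl s `<=` O.
Proof.
move=> oO Ox.
pose F := filter_from [set s : seq nat | forall i, i \in s -> x i] cyl.
have FF : Filter F.
  apply: filter_from_filter; first by exists [::].
  move=> s1 s2 h1 h2; exists (s1 ++ s2).
    by move=> i; rewrite mem_cat => /orP[/h1|/h2].
  by move=> z hz; split => i hi; apply: hz; rewrite mem_cat hi ?orbT.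
suff : F --> x.
  have : nbhs x O by apply: open_nbhs_nbhs.
  by move=> nO /(_ _ nO) [s hs sO]; exists s.
apply/cvg_sup => i.
apply/cvg_image => //.
  by apply/seteqP; split => // b _; exists (fun _ => b).
move=> A /= nA.
exists ((fun f : Om => f i) @^-1` A); last first.
  apply/seteqP; split => [b [f Af <-] //|b Ab].
  by exists (fun _ => b).
have At := sier_nbhs nA.
case xi : (x i).
  exists [:: i]; first by move=> j; rewrite inE => /eqP ->.
  by move=> z /= /(_ i); rewrite inE eqxx => /(_ isT) ->.
exists [::] => // z _ /=.
move: nA; rewrite xi => /sier_nbhs_false ->; done.
Qed.

Lemma coord_open (i : nat) : open [set z : Om | z i].
Proof.
rewrite openE => f /= fi.
have := @cvg_id _ (nbhs f).
have surj : [set g i | g in [set: Om]] = [set: sierpinski].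
  by apply/seteqP; split => // b _; exists (fun _ => b).
move=> /cvg_sup/(_ i)/cvg_image; move=> /(_ surj) h.
have nt : nbhs (f i : sierpinski) [set true].
  apply: open_nbhs_nbhs; split; first by move=> /=.
  by rewrite fi.
have [A nA eA] := h _ nt.
have sub : A `<=` [set z : Om | z i].
  move=> g Ag /=.
  have : [set g0 i | g0 in A] (g i) by exists g.
  by rewrite eA.
rewrite /interior; exact: (@filterS _ (nbhs f) _ _ _ sub nA).
Qed.

Lemma cyl_open (s : seq nat) : open (cyl s).
Proof.
elim: s => [|i s IH].
  by rewrite (_ : cyl [::] = setT); [exact: openT|apply/seteqP; split].
rewrite (_ : cyl (i :: s) = [set z : Om | z i] `&` cyl s).
  exact: openI (coord_open i) IH.
apply/seteqP; split => z /=.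
  by move=> h; split; [apply: h; rewrite inE eqxx|move=> j js; apply: h; rewrite inE js orbT].
by case=> zi h j; rewrite inE => /orP[/eqP ->//|/h].
Qed.

Lemma omega_open_up (O : set Om) (x y : Om) : open O -> O x ->
  (forall i, x i -> y i) -> O y.
Proof.
move=> oO Ox xy; have [s [sx sO]] := omega_open_basic oO Ox.
by apply: sO => i /sx /xy.
Qed.


Definition least (P : nat -> Prop) : nat :=
  match pselect (exists n, `[< P n >]) with
  | left h => ex_minn h
  | right _ => 0%N
  end.

Lemma leastP (P : nat -> Prop) n : P n ->
  P (least P) /\ forall m, P m -> (least P <= m)%N.
Proof.
move=> Pn; rewrite /least; case: pselect => [h|]; last first.
  by case; exists n; apply/asboolP.
case: ex_minnP => m /asboolP Pm hm; split => // k Pk; apply: hm; exact/asboolP.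
Qed.

Lemma least_none (P : nat -> Prop) : ~ (exists n, P n) -> least P = 0%N.
Proof.
move=> hn; rewrite /least; case: pselect => // -[n Pn].
by case: hn; exists n; apply/asboolP.
Qed.

Lemma least_eq (P : nat -> Prop) n : least P = n <->
  (P n /\ forall m, (m < n)%N -> ~ P m) \/ (n = 0%N /\ forall m, ~ P m).
Proof.
split.
  move=> <-; have [[m Pm]|hn] := pselect (exists m, P m).
    have [h1 h2] := leastP Pm; left; split => // k kl Pk.
    by have := h2 _ Pk; rewrite leqNgt kl.
  right; split; first exact: least_none.
  by move=> m Pm; apply: hn; exists m.
case=> [[Pn hm]|[-> hn]]; last by apply: least_none => -[m Pm]; exact: hn Pm.
have [h1 h2] := leastP Pn; apply/eqP; rewrite eqn_leq h2 //=.
by rewrite leqNgt; apply/negP => /hm.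
Qed.

Definition ind (s : seq nat) : Om := fun i => i \in s.

Lemma cyl_ind (s t : seq nat) : cyl s (ind t) <-> {subset s <= t}.
Proof. by []. Qed.

Section Constr.
Variables (U F W : nat -> set Om).
Hypothesis oU : forall n, open (U n).
Hypothesis cF : forall n, closed (F n).
Hypothesis oW : forall n, open (W n).

Definition Qs (c : nat -> bool) (k : nat) (s t : seq nat) : Prop :=
  [/\ {subset s <= t}, c (CodeSeq.code t),
      (forall n, (n <= k)%N -> ~ F n (ind s) -> U n (ind t)) &
      (forall m, (m <= k)%N -> c m -> W m (ind t))].

Fixpoint sq (c : nat -> bool) (k : nat) : seq nat :=
  match k with
  | 0 => [::]
  | k'.+1 => CodeSeq.decode (least (fun n => Qs c k' (sq c k') (CodeSeq.decode n)))
  end.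

Definition xl (c : nat -> bool) : Om := fun i => `[< exists k, i \in sq c k >].

Definition good (c : nat -> bool) : Prop :=
  [/\ c (CodeSeq.code [::]),
      (forall s k, c (CodeSeq.code s) -> exists t, Qs c k s t) &
      (forall s m, c (CodeSeq.code s) -> W m (ind s) -> c m)].

Section Good.
Variable c : nat -> bool.
Hypothesis gc : good c.

Lemma sq_inv k : c (CodeSeq.code (sq c k)).
Proof.
case: gc => g0 g1 g2; elim: k => [//|k IH] /=.
have [t Qt] := g1 _ k IH.
have Qt' : Qs c k (sq c k) (CodeSeq.decode (CodeSeq.code t)) by rewrite CodeSeq.codeK.
by have [[]] := leastP (P := fun n => Qs c k (sq c k) (CodeSeq.decode n)) Qt'.
Qed.

Lemma sq_step k : Qs c k (sq c k) (sq c k.+1).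
Proof.
case: gc => g0 g1 g2; have [t Qt] := g1 _ k (sq_inv k).
have Qt' : Qs c k (sq c k) (CodeSeq.decode (CodeSeq.code t)) by rewrite CodeSeq.codeK.
by have [] := leastP (P := fun n => Qs c k (sq c k) (CodeSeq.decode n)) Qt'.
Qed.

Lemma sq_mono k l : (k <= l)%N -> {subset sq c k <= sq c l}.
Proof.
move/subnK => <-; elim: (l - k)%N => [//|d IH] i /IH.
by rewrite addSn; case: (sq_step (d + k)) => + _ _ _; apply.
Qed.

Lemma ind_sq_xl k : forall i, ind (sq c k) i -> xl c i.
Proof. by move=> i hi; apply/asboolP; exists k. Qed.

Lemma fin_sub_sq (s : seq nat) : (forall i, i \in s -> xl c i) ->
  exists K, {subset s <= sq c K}.
Proof.
elim: s => [|i s IH] h; first by exists 0%N.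
have [K1 h1] : exists K, {subset s <= sq c K}.
  by apply: IH => j js; apply: h; rewrite inE js orbT.
have /asboolP [K2 h2] : xl c i by apply: h; rewrite inE eqxx.
exists (maxn K1 K2) => j; rewrite inE => /orP[/eqP ->|/h1].
  by apply: sq_mono h2; rewrite leq_maxr.
by apply: sq_mono; rewrite leq_maxl.
Qed.

Lemma open_xl (O : set Om) : open O -> O (xl c) -> exists K, O (ind (sq c K)).
Proof.
move=> oO Ox; have [s [sx sO]] := omega_open_basic oO Ox.
have [K hK] := fin_sub_sq sx; exists K; apply: sO => i /hK; done.
Qed.

Lemma open_xl_ge (O : set Om) : open O -> O (xl c) ->
  forall k, exists2 K, (k <= K)%N & O (ind (sq c K)).
Proof.
move=> oO Ox k; have [K OK] := open_xl oO Ox; exists (maxn k K); first exact: leq_maxl.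
by apply: omega_open_up oO OK _ => i; apply: sq_mono; rewrite leq_maxr.
Qed.

Lemma xl_A n : U n (xl c) \/ F n (xl c).
Proof.
have [Fx|nFx] := pselect (F n (xl c)); first by right.
left.
have oC : open (~` F n) by rewrite openC.
have [K nK hK] := open_xl_ge oC nFx n.
have [_ _ h _] := sq_step K.
exact: omega_open_up (oU n) (h n nK hK) (ind_sq_xl (k := K.+1)).
Qed.

Lemma xl_W m : c m <-> W m (xl c).
Proof.
split => [cm|Wx].
  have [_ _ _ h] := sq_step m.
  exact: omega_open_up (oW m) (h m (leqnn m) cm) (ind_sq_xl (k := m.+1)).
have [K WK] := open_xl (oW m) Wx.
case: gc => _ _ g2; exact: g2 (sq_inv K) WK.
Qed.

End Good.
End Constr.

Section Meas.
Variables (T : Type) (G : set (set T)).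
Hypothesis hG : sigma_algebra setT G.

Definition GP (P : T -> Prop) := G [set t | P t].

Lemma GP_ext (P Q : T -> Prop) : (forall t, P t <-> Q t) -> GP Q -> GP P.
Proof.
move=> h; rewrite /GP (_ : [set t | P t] = [set t | Q t]) //.
by apply/seteqP; split => t /h.
Qed.

Lemma GP_not P : GP P -> GP (fun t => ~ P t).
Proof.
case: hG => _ hC _ /hC; rewrite /GP.
rewrite (_ : setT `\` _ = [set t | ~ P t]) //.
by apply/seteqP; split => t /=; [case|move=> h; split].
Qed.

Lemma GP_exn (P : nat -> T -> Prop) : (forall n, GP (P n)) ->
  GP (fun t => exists n, P n t).
Proof.
case: hG => _ _ hU h; have := hU (fun n => [set t | P n t]) h.
rewrite /GP (_ : \bigcup_k _ = [set t | exists n, P n t]) //.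
by apply/seteqP; split => t /=; [case=> n _ Pn; exists n|case=> n Pn; exists n].
Qed.

Lemma GP_const (R : Prop) : GP (fun _ => R).
Proof.
case: hG => h0 hC _; have [r|nr] := pselect R.
  rewrite /GP (_ : [set _ | R] = setT `\` set0); first exact: hC.
  by apply/seteqP; split => t /= //; rewrite /setD /=; tauto.
rewrite /GP (_ : [set _ | R] = set0) //.
by apply/seteqP; split => t /= //.
Qed.

Lemma GP_or P Q : GP P -> GP Q -> GP (fun t => P t \/ Q t).
Proof.
move=> hP hQ; apply: (@GP_ext _ (fun t => exists n, if n is 0 then P t else Q t)).
  move=> t; split; first by case=> [Pt|Qt]; [exists 0%N|exists 1%N].
  by case=> -[|n]; [left|right].
by apply: GP_exn => -[|n].
Qed.

Lemma GP_and P Q : GP P -> GP Q -> GP (fun t => P t /\ Q t).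
Proof.
move=> hP hQ; apply: (@GP_ext _ (fun t => ~ (~ P t \/ ~ Q t))).
  move=> t; split; first by case=> Pt Qt; case.
  move=> h; split; apply: contrapT => h'; apply: h; tauto.
by apply/GP_not/GP_or; apply: GP_not.
Qed.

Lemma GP_imp P Q : GP P -> GP Q -> GP (fun t => P t -> Q t).
Proof.
move=> hP hQ; apply: (@GP_ext _ (fun t => ~ P t \/ Q t)).
  move=> t; split; last by case=> [nP /nP|].
  by move=> h; have [/h|] := pselect (P t); [right|left].
exact/GP_or/hQ/GP_not.
Qed.

Lemma GP_alln (P : nat -> T -> Prop) : (forall n, GP (P n)) ->
  GP (fun t => forall n, P n t).
Proof.
move=> h; apply: (@GP_ext _ (fun t => ~ exists n, ~ P n t)).
  move=> t; split; first by move=> hP [n]; apply.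
  by move=> hn n; apply: contrapT => nP; apply: hn; exists n.
by apply/GP_not/GP_exn => n; exact/GP_not.
Qed.

Lemma GP_exs (P : seq nat -> T -> Prop) : (forall s, GP (P s)) ->
  GP (fun t => exists s, P s t).
Proof.
move=> h; apply: (@GP_ext _ (fun t => exists n, P (CodeSeq.decode n) t)).
  move=> t; split; last by case=> n; exists (CodeSeq.decode n).
  by case=> s Ps; exists (CodeSeq.code s); rewrite CodeSeq.codeK.
by apply: GP_exn.
Qed.

Lemma GP_least (P : nat -> T -> Prop) j : (forall n, GP (P n)) ->
  GP (fun t => least (fun n => P n t) = j).
Proof.
move=> h; apply: (GP_ext (fun t => least_eq _ _)).
apply: GP_or; apply: GP_and.
- exact: h.
- by apply: GP_alln => m; apply: GP_imp; [exact: GP_const|exact/GP_not].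
- exact: GP_const.
- by apply: GP_alln => m; exact/GP_not.
Qed.

Variables (U F W : nat -> set Om) (cc : T -> nat -> bool).
Hypothesis hc : forall n, GP (fun t => cc t n).

Lemma GP_Qs k s u : GP (fun t => Qs U F W (cc t) k s u).
Proof.
apply: (@GP_ext _ (fun t => ({subset s <= u} /\ cc t (CodeSeq.code u)) /\
    ((forall n, (n <= k)%N -> ~ F n (ind s) -> U n (ind u)) /\
     (forall m, (m <= k)%N -> cc t m -> W m (ind u))))).
  move=> t; split; first by case=> a b c d.
  by case=> -[a b] [c d].
apply: GP_and; apply: GP_and.
- exact: GP_const.
- exact: hc.
- exact: GP_const.
- by apply: GP_alln => m; apply: GP_imp; [exact: GP_const|apply: GP_imp; [exact: hc|exact: GP_const]].
Qed.

Lemma GP_sq k s : GP (fun t => sq U F W (cc t) k = s).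
Proof.
elim: k s => [|k IH] s /=; first exact: GP_const.
apply: (@GP_ext _ (fun t => exists r, sq U F W (cc t) k = r /\
   least (fun n => Qs U F W (cc t) k r (CodeSeq.decode n)) = CodeSeq.code s)).
  move=> t; split.
    by move=> <-; exists (sq U F W (cc t) k); rewrite CodeSeq.decodeK.
  by case=> r [-> ->]; rewrite CodeSeq.codeK.
apply: GP_exs => r; apply: GP_and; first exact: IH.
by apply: GP_least => n; exact: GP_Qs.
Qed.

Hypothesis oU : forall n, open (U n).
Hypothesis cF : forall n, closed (F n).
Hypothesis oW : forall n, open (W n).
Hypothesis gcc : forall t, good U F W (cc t).

Lemma GP_xl (O : set Om) : open O -> GP (fun t => O (xl U F W (cc t))).
Proof.
move=> oO.
apply: (@GP_ext _ (fun t => exists k, exists s, sq U F W (cc t) k = s /\ O (ind s))).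
  move=> t; split.
    by move=> /(open_xl (gcc t) oO) [K OK]; exists K, (sq U F W (cc t) K).
  case=> K [s [<- Os]]; apply: omega_open_up oO Os _.
  exact: ind_sq_xl.
apply: GP_exn => k; apply: GP_exs => s; apply: GP_and; [exact: GP_sq|exact: GP_const].
Qed.

End Meas.

Lemma Pi02_count (Tt : topologicalType) (I : countType) (A : set Tt)
  (U' F' : I -> set Tt) : (forall i, open (U' i)) -> (forall i, closed (F' i)) ->
  (forall x, A x <-> forall i, U' i x \/ F' i x) -> Pi02 A.
Proof.
move=> oU' cF' hA.
exists (fun n => if unpickle n is Some i then U' i else setT).
exists (fun n => if unpickle n is Some i then F' i else setT).
split.
- by move=> n; case: unpickle => [i|]; [exact: oU'|exact: openT].
- by move=> n; case: unpickle => [i|]; [exact: cF'|exact: closedT].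
apply/seteqP; split => x.
  move/hA => h n _; case: unpickle => [i|]; [exact: h|by left].
move=> h; apply/hA => i; have := h (pickle i) Logic.I; by rewrite pickleK.
Qed.

Lemma open_eq (Tt : topologicalType) (A B : set Tt) : A = B -> open B -> open A.
Proof. by move=> ->. Qed.

Lemma open_imp_coord (R : Prop) m : open [set c : Om | R -> c m].
Proof.
have [r|nr] := pselect R.
  rewrite (_ : [set c : Om | R -> c m] = [set c | c m]); first exact: coord_open.
  by apply/seteqP; split => c /=; [apply|move=> ? _].
rewrite (_ : [set c : Om | R -> c m] = setT); first exact: openT.
by apply/seteqP; split => c //= _ /nr.
Qed.

Lemma closed_and_ncoord (R : Prop) n : closed [set c : Om | R /\ ~ c n].
Proof.
have [r|nr] := pselect R.
  rewrite (_ : [set c : Om | R /\ ~ c n] = ~` [set c | c n]).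
    by rewrite closedC; exact: coord_open.
  by apply/seteqP; split => c /=; [case|move=> h; split].
rewrite (_ : [set c : Om | R /\ ~ c n] = set0); first exact: closed0.
by apply/seteqP; split => c //= [/nr].
Qed.

Lemma mem_le_sumn (M : seq nat) m : m \in M -> (m <= sumn M)%N.
Proof.
elim: M => [//|a M IH]; rewrite inE /= => /orP[/eqP ->|/IH h].
  exact: leq_addr.
by apply: leq_trans h _; exact: leq_addl.
Qed.

Section GoodPi02.
Variables (U F W : nat -> set Om).
Hypothesis oU : forall n, open (U n).
Hypothesis cF : forall n, closed (F n).
Hypothesis oW : forall n, open (W n).

Definition Qfix (s : seq nat) (k : nat) (M : seq nat) (u : seq nat) : Prop :=
  [/\ {subset s <= u}, (forall n, (n <= k)%N -> ~ F n (ind s) -> U n (ind u)) &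
      (forall m, m \in M -> W m (ind u))].

Definition condI := (unit + ((seq nat * nat * seq nat) + (seq nat * nat)))%type.

Definition Ucond (i : condI) : set Om :=
  match i with
  | inl _ => [set c | c (CodeSeq.code [::])]
  | inr (inl (s, k, M)) => [set c | exists u, Qfix s k M u /\ c (CodeSeq.code u)]
  | inr (inr (s, m)) => [set c | W m (ind s) -> c m]
  end.

Definition Fcond (i : condI) : set Om :=
  match i with
  | inl _ => set0
  | inr (inl (s, k, M)) => ~` cyl (CodeSeq.code s :: M)
  | inr (inr (s, m)) => [set c | W m (ind s) /\ ~ c (CodeSeq.code s)]
  end.

Lemma Ucond_open i : open (Ucond i).
Proof.
case: i => [_|[[[s k] M]|[s m]]] /=.
- exact: coord_open.
- apply: (@open_eq _ _ (\bigcup_(u in Qfix s k M) [set c : Om | c (CodeSeq.code u)])).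
    by apply/seteqP; split => c /=; case=> u [] ? ?; exists u.
  by apply: bigcup_open => u _; exact: coord_open.
- exact: open_imp_coord.
Qed.

Lemma Fcond_closed i : closed (Fcond i).
Proof.
case: i => [_|[[[s k] M]|[s m]]] /=.
- exact: closed0.
- by rewrite closedC; exact: cyl_open.
- exact: closed_and_ncoord.
Qed.

Lemma good_cond (c : Om) : good U F W c <-> forall i, Ucond i c \/ Fcond i c.
Proof.
split.
  case=> g0 g1 g2 [_|[[[s k] M]|[s m]]] /=.
  - by left.
  - have [hc|hc] := pselect (cyl (CodeSeq.code s :: M) c); last by right.
    left; have cs : c (CodeSeq.code s) by apply: hc; rewrite inE eqxx.
    have [u [su cu hU hW]] := g1 s (k + sumn M)%N cs.
    exists u; split => //; split => //.
      by move=> n nk; apply: hU; apply: leq_trans nk (leq_addr _ _).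
    move=> m mM; apply: hW; last by apply: hc; rewrite inE mM orbT.
    by apply: leq_trans (mem_le_sumn mM) (leq_addl _ _).
  - have [cs|ncs] := pselect (c (CodeSeq.code s)).
      by left => Wm; exact: g2 cs Wm.
    have [Wm|nWm] := pselect (W m (ind s)); first by right.
    by left.
move=> h; split.
- by case: (h (inl tt)).
- move=> s k cs.
  pose M := [seq m <- iota 0 k.+1 | c m].
  case: (h (inr (inl (s, k, M)))) => /=.
    case=> u [[su hU hW] cu]; exists u; split => // m mk cm; apply: hW.
    by rewrite mem_filter cm mem_iota /= add0n ltnS.
  case=> j; rewrite inE => /orP[/eqP ->//|].
  by rewrite mem_filter => /andP[].
- move=> s m cs Wm; case: (h (inr (inr (s, m)))) => /=.
    by apply.
  by case.
Qed.

Lemma good_Pi02 : Pi02 [set c : Om | good U F W c].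
Proof.
apply: (@Pi02_count _ condI _ Ucond Fcond Ucond_open Fcond_closed).
exact: good_cond.
Qed.

End GoodPi02.

Lemma parts234 (X : topologicalType) (E : equiv_rel X) :
  (forall U : set X, open U -> open (saturation E U)) ->
  let p := @sep_proj X E in
  [/\ continuous p /\ (forall U : set X, open U -> open (p @` U)),
      (forall x y : X, (p x = p y <-> approxE E x y) /\
                       (approxE E x y <-> closure (eclass E x) = closure (eclass E y)))
    & (forall x y : X, spec_le (p x) (p y) <-> closure (eclass E y) x)].
Proof.
move=> hsat p; split.
- split.
    by apply/continuousP => A oA.
  move=> U oU; rewrite /p /sep_proj -(image_comp (\pi_(quotient_space E)) (@T0_proj _)).
  exact/q_open/pi_open.
- move=> x y; split; last exact: approx_cl.
  rewrite approx_cl // /p /sep_proj q_eq; split => h.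
    apply/seteqP; split => z.
      by move=> /(cl_pi hsat); rewrite h => /(cl_pi hsat).
    by move=> /(cl_pi hsat); rewrite -h => /(cl_pi hsat).
  apply/seteqP; split => a; have [z <-] := pi_surj a.
    by move=> /(cl_pi hsat); rewrite h => /(cl_pi hsat).
  by move=> /(cl_pi hsat); rewrite -h => /(cl_pi hsat).
- move=> x y; rewrite /spec_le /p /sep_proj cl_q; exact: cl_pi.
Qed.


Section Final.
Context (X : topologicalType) (E : equiv_rel X).
Hypothesis hsat : forall U : set X, open U -> open (saturation E U).
Variables (A : set Om) (h : X -> Om) (U F : nat -> set Om).
Hypothesis oU : forall n, open (U n).
Hypothesis cF : forall n, closed (F n).
Hypothesis hA : A = \bigcap_n (U n `|` F n).
Hypothesis hinj : injective h.
Hypothesis hrange : range h = A.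
Hypothesis hX : forall V : set X, open V <-> exists2 W, open W & V = h @^-1` W.

Local Notation Y := (sep_quotient E).
Local Notation p := (@sep_proj X E).

Lemma p_surj (y : Y) : exists x, p x = y.
Proof.
exists (repr (repr y)); rewrite /sep_proj /T0_proj.
by rewrite !reprK.
Qed.

Lemma openYE (V : set Y) : open V <-> open (p @^-1` V).
Proof. by []. Qed.

Lemma p_open (V : set X) : open V -> open (p @` V).
Proof. by case: (parts234 hsat) => -[_ ho] _ _; exact: ho. Qed.

Lemma A_mem z : A z <-> forall n, U n z \/ F n z.
Proof.
rewrite hA; split; first by move=> hz n; exact: hz.
by move=> hz n _; exact: hz.
Qed.

Lemma h_open_cyl s : open (h @^-1` cyl s).
Proof. by apply/hX; exists (cyl s) => //; exact: cyl_open. Qed.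

Definition Vb (s : seq nat) : set Y := p @` (h @^-1` cyl s).

Lemma Vb_open s : open (Vb s).
Proof. exact/p_open/h_open_cyl. Qed.

Definition cy (y : Y) : Om := fun n => `[< Vb (CodeSeq.decode n) y >].

Lemma cyP y s : cy y (CodeSeq.code s) <-> Vb s y.
Proof. by rewrite /cy CodeSeq.codeK; split => /asboolP. Qed.

Lemma exW : exists W : nat -> set Om, forall n,
  open (W n) /\ h @^-1` (W n) = p @^-1` (Vb (CodeSeq.decode n)).
Proof.
suff /boolp.choice [W hW] : forall n, exists W : set Om,
    open W /\ h @^-1` W = p @^-1` (Vb (CodeSeq.decode n)) by exists W.
move=> n.
have : open (p @^-1` Vb (CodeSeq.decode n)) by apply/openYE; exact: Vb_open.
by move/hX => [W oW ->]; exists W.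
Qed.

Lemma T0_base (a b : Y) : (forall s, Vb s a <-> Vb s b) -> a = b.
Proof.
move=> hab.
have [x1 ex1] := p_surj a; have [x2 ex2] := p_surj b; subst a b.
case: (parts234 hsat) => _ h3 _.
apply/(h3 x1 x2).1.
have key (a1 a2 : X) : (forall s, Vb s (p a1) -> Vb s (p a2)) ->
    closure (eclass E a2) a1.
  move=> hv; apply/closure_openP => V oV Va1.
  have [W' oW' eV] := (hX V).1 oV.
  have : W' (h a1) by move: Va1; rewrite eV.
  move=> /(omega_open_basic oW') [s [sh sW]].
  have : Vb s (p a1) by exists a1.
  move=> /hv [x3 hx3 e3].
  have /(h3 x3 a2).1 [c32 _] := e3.
  have V3 : V x3 by rewrite eV; apply: sW.
  have /closure_openP := c32.
  by move=> /(_ V oV V3).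
by split; apply: key => s; [exact: (hab s).1|exact: (hab s).2].
Qed.


Lemma accum (z : Om) (P : nat -> seq nat -> Prop) k :
  (forall n s s', {subset s <= s'} -> P n s -> P n s') ->
  (forall n, (n <= k)%N -> exists s, (forall i, i \in s -> z i) /\ P n s) ->
  exists s, (forall i, i \in s -> z i) /\ forall n, (n <= k)%N -> P n s.
Proof.
move=> mono; elim: k => [|k IH] hex.
  have [s [sz Ps]] := hex 0%N (leqnn 0).
  by exists s; split => // n; rewrite leqn0 => /eqP ->.
have [s1 [s1z P1]] : exists s, (forall i, i \in s -> z i) /\
    forall n, (n <= k)%N -> P n s.
  by apply: IH => n nk; apply: hex; exact: leqW.
have [s2 [s2z P2]] := hex k.+1 (leqnn _).
exists (s1 ++ s2); split.
  by move=> i; rewrite mem_cat => /orP[/s1z|/s2z].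
move=> n; rewrite leq_eqVlt => /orP[/eqP ->|nk].
  by apply: mono P2 => i ii; rewrite mem_cat ii orbT.
by apply: mono (P1 n nk) => i ii; rewrite mem_cat ii.
Qed.

Lemma sub_ind (s t : seq nat) : {subset s <= t} -> forall i, ind s i -> ind t i.
Proof. by move=> st i /st. Qed.

Section WithW.
Variable W : nat -> set Om.
Hypothesis hW : forall n,
  open (W n) /\ h @^-1` (W n) = p @^-1` (Vb (CodeSeq.decode n)).

Lemma oW n : open (W n). Proof. by case: (hW n). Qed.

Lemma WVb n x : W n (h x) <-> Vb (CodeSeq.decode n) (p x).
Proof.
case: (hW n) => _ e.
have : (h @^-1` W n) x <-> (p @^-1` Vb (CodeSeq.decode n)) x by rewrite e.
by [].
Qed.

Lemma good_cy y : good U F W (cy y).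
Proof.
split.
- apply/cyP; have [x <-] := p_surj y; exists x => //.
- move=> s k /cyP [x hx ey]; subst y.
  pose z := h x.
  have Az : A z by rewrite -hrange; exists x.
  have sz : forall i, ind s i -> z i by [].
  pose P n t := (~ F n (ind s) -> U n (ind t)) /\ (cy (p x) n -> W n (ind t)).
  have [t [tz Pt]] : exists t, (forall i, i \in t -> z i) /\
      forall n, (n <= k)%N -> P n t.
    apply: accum.
      move=> n t1 t2 t12 [h1 h2]; split.
        by move=> /h1 Ut1; apply: omega_open_up (oU n) Ut1 (sub_ind t12).
      by move=> /h2 Wt1; apply: omega_open_up (oW n) Wt1 (sub_ind t12).
    move=> n _.
    have [t1 [t1z Pt1]] : exists t1, (forall i, i \in t1 -> z i) /\
        (~ F n (ind s) -> U n (ind t1)).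
      have [nF|] := pselect (~ F n (ind s)); last by move=> h0; exists [::].
      have oC : open (~` F n) by rewrite openC.
      have nFz : ~ F n z by apply: omega_open_up oC nF sz.
      have Uz : U n z by case: ((A_mem z).1 Az n).
      have [t1 [t1z t1U]] := omega_open_basic (oU n) Uz.
      by exists t1; split => // _; apply: t1U.
    have [t2 [t2z Pt2]] : exists t2, (forall i, i \in t2 -> z i) /\
        (cy (p x) n -> W n (ind t2)).
      have [cn|] := pselect (cy (p x) n); last by move=> h0; exists [::].
      have Wz : W n z by apply/WVb; move/asboolP: cn.
      have [t2 [t2z t2W]] := omega_open_basic (oW n) Wz.
      by exists t2; split => // _; apply: t2W.
    exists (t1 ++ t2); split.
      by move=> i; rewrite mem_cat => /orP[/t1z|/t2z].
    split.
      move=> /Pt1 U1; apply: omega_open_up (oU n) U1 _.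
      by move=> i; rewrite /ind mem_cat => ->.
    move=> /Pt2 W2; apply: omega_open_up (oW n) W2 _.
    by move=> i; rewrite /ind mem_cat => ->; rewrite orbT.
  exists (s ++ t); split.
  + by move=> i ii; rewrite mem_cat ii.
  + apply/cyP; exists x => //= i; rewrite mem_cat => /orP[/sz|/tz] //.
  + move=> n nk /(Pt n nk).1 Ut; apply: omega_open_up (oU n) Ut _.
    by move=> i; rewrite /ind mem_cat => ->; rewrite orbT.
  + move=> m mk /(Pt m mk).2 Wt; apply: omega_open_up (oW m) Wt _.
    by move=> i; rewrite /ind mem_cat => ->; rewrite orbT.
- move=> s m /cyP [x hx ey] Wm; subst y.
  have Wz : W m (h x) by apply: omega_open_up (oW m) Wm _.
  by apply/asboolP; apply/WVb.
Qed.

Lemma xl_h y : exists x, h x = xl U F W (cy y) /\ p x = y.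
Proof.
have gy := good_cy y.
have : A (xl U F W (cy y)) by apply/A_mem; exact: xl_A oU cF _ gy.
rewrite -hrange => -[x _ hx]; exists x; split => //.
apply: T0_base => s; rewrite -!cyP.
rewrite (xl_W oW gy) -hx WVb CodeSeq.codeK.
exact: cyP.
Qed.


Lemma cy_coord n : cy @^-1` [set z : Om | z n] = Vb (CodeSeq.decode n).
Proof. by apply/seteqP; split => y /=; move/asboolP. Qed.

Lemma cy_cyl_open s : open (cy @^-1` cyl s).
Proof.
elim: s => [|i s IH].
  rewrite (_ : _ @^-1` _ = setT); first exact: openT.
  by apply/seteqP; split => y //= _ i.
rewrite (_ : _ @^-1` _ = cy @^-1` [set z : Om | z i] `&` cy @^-1` cyl s).
  by apply: openI IH; rewrite cy_coord; exact: Vb_open.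
apply/seteqP; split => y /=.
  by move=> hy; split; [apply: hy; rewrite inE eqxx|move=> j js; apply: hy; rewrite inE js orbT].
by case=> yi hy j; rewrite inE => /orP[/eqP ->//|/hy].
Qed.

Lemma Y_quasi_polish : quasi_polish Y.
Proof.
exists [set c : Om | good U F W c], cy; split.
- exact: good_Pi02.
- by move=> a b e; apply: T0_base => s; rewrite -!cyP e.
- apply/seteqP; split.
    by move=> c [y _ <-]; exact: good_cy.
  move=> c gc.
  have : A (xl U F W c) by apply/A_mem; exact: xl_A oU cF _ gc.
  rewrite -hrange => -[x _ hx]; exists (p x) => //.
  apply: funext => n.
  have e := xl_W oW gc n; rewrite -hx WVb in e.
  by rewrite /cy; apply/idP/idP => [/asboolP/e|/e/asboolP].
- move=> V; split.
    move=> oV.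
    exists (\bigcup_(s in [set s | Vb s `<=` V]) [set z : Om | z (CodeSeq.code s)]).
      by apply: bigcup_open => s _; exact: coord_open.
    apply/seteqP; split.
      move=> y Vy; have [x ex] := p_surj y; subst y.
      have : open (p @^-1` V) by apply/openYE.
      move=> /hX [W2 oW2 eV].
      have : W2 (h x) by have : (p @^-1` V) x by []; rewrite eV.
      move=> /(omega_open_basic oW2) [s [sx sW]].
      exists s.
        move=> y [x' hx' <-].
        have : (h @^-1` W2) x' by apply: sW.
        by rewrite -eV.
      by apply/cyP; exists x.
    by move=> y [s sV /cyP]; apply: sV.
  case=> W' oW' ->.
  apply: (@open_eq _ _ (\bigcup_(s in [set s | cyl s `<=` W']) (cy @^-1` cyl s))).
    apply/seteqP; split.
      move=> y /= W'y; have [s [sy sW]] := omega_open_basic oW' W'y.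
      by exists s => //.
    by move=> y [s sW cs]; apply: sW.
  by apply: bigcup_open => s _; exact: cy_cyl_open.
Qed.

Lemma borel_section : exists s : Y -> X,
  (forall q, p (s q) = q) /\ borel_measurable s.
Proof.
have /boolp.choice [sf hs] : forall y, exists x,
  h x = xl U F W (cy y) /\ p x = y by exact: xl_h.
exists sf; split; first by move=> q; case: (hs q).
have hG : sigma_algebra setT (@borel Y) by exact: smallest_sigma_algebra.
suff key : smallest (sigma_algebra setT) (@open X) `<=`
    [set B : set X | @borel Y (sf @^-1` B)] by move=> B /key.
apply: smallest_sub.
- split.
  + by rewrite /= preimage_set0; case: hG.
  + move=> C bC /=; rewrite (_ : _ @^-1` _ = setT `\` (sf @^-1` C)).
      by case: hG => _ hC _; exact: hC.
    by apply/seteqP; split => y /=.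
  + move=> C bC /=; rewrite preimage_bigcup.
    by case: hG => _ _ hU; apply: hU.
- move=> V /hX [W2 oW2 ->] /=.
  have : GP (@borel Y) (fun y => W2 (xl U F W (cy y))).
    apply: GP_xl => //.
    - move=> n; rewrite /GP.
      rewrite (_ : [set t | _] = Vb (CodeSeq.decode n)); last first.
        by apply/seteqP; split => y /=; move/asboolP.
      by move=> S [_ hS]; apply: hS; exact: Vb_open.
    - exact: good_cy.
  rewrite /GP; congr (@borel Y _).
  by apply/seteqP; split => y /=; rewrite (hs y).1.
Qed.

End WithW.

End Final.

Unset Implicit Arguments.
Local Close Scope quotient_scope.

Theorem proposition2p1 (X : topologicalType) (E : equiv_rel X) :
  quasi_polish X ->
  (forall U : set X, open U -> open (saturation E U)) ->
  let p := @sep_proj X E in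
  [/\ quasi_polish (sep_quotient E),
      continuous p /\ (forall U : set X, open U -> open (p @` U)),
      (forall x y : X, (p x = p y <-> approxE E x y) /\
                       (approxE E x y <-> closure (eclass E x) = closure (eclass E y))),
      (forall x y : X, spec_le (p x) (p y) <-> closure (eclass E y) x)
    & exists s : sep_quotient E -> X,
        (forall q, p (s q) = q) /\ borel_measurable s].
Proof.
move=> [A [h [[U [F [oU cF hA]]] hinj hrange hX]]] hsat p.
have [W hW] := exW hsat hX.
have [h2 h3 h4] := parts234 hsat.
split => //.
- exact: (Y_quasi_polish hsat oU cF hA hrange hX hW).
- exact: (borel_section hsat oU cF hA hrange hX hW).
Qed.
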